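(* Let $x_0 \in \mathbb R^{n_x}$ and $u_0 \in \mathbb R^{n_u} \times \{0,1\}^{m_u}$ with $(x_0,u_0) \in \mathcal D$, let $v_0 := V u_0$, let $e_0 \in \mathbb R^{n_x}$, and let $x_1 := A x_0 + B u_0 + e_0$. Let $\mathcal V_0 = [(\underline v_{t|0})_{t=0}^{T-1}, (\bar v_{t|0})_{t=0}^{T-1}]$ be an interval with $\underline v_{0|0} \le v_0 \le \bar v_{0|0}$, and let $\mathcal V_1 := [(\underline v_{1|0}, \ldots, \underline v_{T-1|0}, 0), (\bar v_{1|0}, \ldots, \bar v_{T-1|0}, 1)]$ (with $0,1 \in \mathbb R^{m_u}$ the all-zero and all-one vectors). Let $\{\lambda_{t|0}, \rho_{t|0}\}_{t=0}^{T}$ and $\{\mu_{t|0}, \underline\nu_{t|0}, \bar\nu_{t|0}, \sigma_{t|0}\}_{t=0}^{T-1}$ be feasible multipliers for $\mathbf D(\mathcal V_0; x_0)$ with dual objective value $\underline\theta_0(\mathcal V_0)$. Define $$\pi_1 := -|Q x_0|^2 - |R u_0|^2,\qquad \pi_2 := |\rho_{0|0}/2 - Q x_0|^2 + |\sigma_{0|0}/2 - R u_0|^2,$$ $$\pi_3 := (h - F x_0 - G u_0)'\mu_{0|0} + (v_0 - \underline v_{0|0})'\underline\nu_{0|0} + (\bar v_{0|0} - v_0)'\bar\nu_{0|0},\qquad \pi_4 := -e_0'\lambda_{1|0}.$$ Then $\underline\theta_1(\mathcal V_1) := \underline\theta_0(\mathcal V_0) + \sum_{i=1}^4 \pi_i$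 is a lower bound on $\theta(\mathcal V_1; x_1)$, the optimal value of $\mathbf P(\mathcal V_1; x_1)$.
   Context: Fix integers $n_x, n_u, m_u \ge 0$ and $T \ge 1$. Let $A \in \mathbb R^{n_x \times n_x}$, $B \in \mathbb R^{n_x \times (n_u+m_u)}$, and let $F, G, h$ define the polyhedron $\mathcal D = \{(x,u) \in \mathbb R^{n_x} \times \mathbb R^{n_u+m_u} : F x + G u \le h\}$, assumed to contain the origin. Input vectors $u \in \mathbb R^{n_u+m_u}$ have $n_u$ continuous entries and $m_u$ entries intended to be binary; $V \in \mathbb R^{m_u \times (n_u+m_u)}$ is the selection matrix extracting the latter. Let $Q$ (with $n_x$ columns) and $R$ (with $n_u+m_u$ columns) be weight matrices, possibly rank deficient. An interval is a set $\mathcal V = [(\underline v_t)_{t=0}^{T-1}, (\bar v_t)_{t=0}^{T-1}] \subset \mathbb R^{T m_u}$ with $\underline v_t, \bar v_t \in \{0,1\}^{m_u}$, $\underline v_t \le \bar v_t$. For an interval $\mathcal V$ and $\xi \in \mathbb R^{n_x}$, the QP $\mathbf P(\mathcal V; \xi)$ is: minimize $\sum_{t=0}^T |Q x_t|^2 + \sum_{t=0}^{T-1} |R u_t|^2$ over $x_0,\ldots,x_T \in \mathbb R^{n_x}$, $u_0, \ldots, u_{T-1} \in \mathbb R^{n_u+m_u}$ subject to $x_0 = \xi$, $x_{t+1} = A x_t + B u_t$, $(x_t, u_t) \in \mathcal D$, $\underline v_t \le V u_t \le \bar v_t$ ($t = 0, \ldots, T-1$); its optimal value is $\theta(\mathcal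 V;\xi) \in \mathbb R_{\ge 0} \cup \{\infty\}$ ($\infty$ if infeasible). Its dual $\mathbf D(\mathcal V; \xi)$ is: maximize $$-\sum_{t=0}^{T} |\rho_t/2|^2 - \sum_{t=0}^{T-1}\big(|\sigma_t/2|^2 + h'\mu_t + \bar v_t'\bar\nu_t - \underline v_t'\underline\nu_t\big) - \xi'\lambda_0$$ over $\{\lambda_t, \rho_t\}_{t=0}^T$, $\{\mu_t, \underline\nu_t, \bar\nu_t, \sigma_t\}_{t=0}^{T-1}$ subject to: $Q'\rho_t + \lambda_t - A'\lambda_{t+1} + F'\mu_t = 0$ ($t=0,\ldots,T-1$); $Q'\rho_T + \lambda_T = 0$; $R'\sigma_t - B'\lambda_{t+1} + G'\mu_t + V'(\bar\nu_t - \underline\nu_t) = 0$ ($t = 0, \ldots, T-1$); $(\mu_t, \underline\nu_t, \bar\nu_t) \ge 0$. The dual objective value of a feasible point is the value of this objective at it. $|\cdot|$ is the Euclidean norm, $'$ the transpose. *)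

(* Defs.v *)
From HB Require Import structures.
From mathcomp Require Import all_boot all_order all_algebra.
From mathcomp Require Import all_classical all_reals all_analysis.
Set Implicit Arguments. Unset Strict Implicit. Unset Printing Implicit Defensive.
Import Order.TTheory GRing.Theory Num.Theory.
Local Open Scope ring_scope.
Local Open Scope classical_set_scope.

Section Defs.
Variable R : realType.

Definition sqnorm n (v : 'cV[R]_n) : R := \sum_(i < n) (v i 0) ^+ 2.
Definition dotp n (u v : 'cV[R]_n) : R := \sum_(i < n) u i 0 * v i 0.

Definition mxle m n (M N : 'M[R]_(m, n)) : Prop := forall i j, M i j <= N i j.

Definition selV nu mu : 'M[R]_(mu, nu + mu) := row_mx (0 : 'M[R]_(mu, nu)) 1%:M.

Definition zerov m : 'cV[R]_m := const_mx 0.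
Definition onev m : 'cV[R]_m := const_mx 1.

Definition is_binary m (v : 'cV[R]_m) : Prop := forall i, v i 0 = 0 \/ v i 0 = 1.

Definition is_bin_interval mu (T : nat) (vlo vhi : nat -> 'cV[R]_mu) : Prop :=
  forall t, (t < T)%N -> [/\ is_binary (vlo t), is_binary (vhi t) & mxle (vlo t) (vhi t)].

Definition primal_feasible nx nu mu p (T : nat)
  (A : 'M[R]_nx) (B : 'M[R]_(nx, nu + mu)) (F : 'M[R]_(p, nx))
  (G : 'M[R]_(p, nu + mu)) (h : 'cV[R]_p)
  (vlo vhi : nat -> 'cV[R]_mu) (xi : 'cV[R]_nx)
  (x : nat -> 'cV[R]_nx) (u : nat -> 'cV[R]_(nu + mu)) : Prop :=
  x 0%N = xi /\
  forall t, (t < T)%N ->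
    [/\ x t.+1 = A *m x t + B *m u t,
        mxle (F *m x t + G *m u t) h,
        mxle (vlo t) (selV nu mu *m u t) &
        mxle (selV nu mu *m u t) (vhi t)].

Definition primal_cost nx nu mu q r (T : nat) (Q : 'M[R]_(q, nx))
  (Rw : 'M[R]_(r, nu + mu))
  (x : nat -> 'cV[R]_nx) (u : nat -> 'cV[R]_(nu + mu)) : R :=
  \sum_(t < T.+1) sqnorm (Q *m x t) + \sum_(t < T) sqnorm (Rw *m u t).

(* theta(V; xi): infimum of the cost over feasible points (+oo if infeasible) *)
Definition thetaP nx nu mu p q r (T : nat)
  (A : 'M[R]_nx) (B : 'M[R]_(nx, nu + mu)) (F : 'M[R]_(p, nx))
  (G : 'M[R]_(p, nu + mu)) (h : 'cV[R]_p) (Q : 'M[R]_(q, nx))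
  (Rw : 'M[R]_(r, nu + mu))
  (vlo vhi : nat -> 'cV[R]_mu) (xi : 'cV[R]_nx) : \bar R :=
  ereal_inf [set c | exists x u,
     primal_feasible T A B F G h vlo vhi xi x u /\
     c = (primal_cost T Q Rw x u)%:E].

Definition dual_feasible nx nu mu p q r (T : nat)
  (A : 'M[R]_nx) (B : 'M[R]_(nx, nu + mu)) (F : 'M[R]_(p, nx))
  (G : 'M[R]_(p, nu + mu)) (Q : 'M[R]_(q, nx)) (Rw : 'M[R]_(r, nu + mu))
  (lam : nat -> 'cV[R]_nx) (rho : nat -> 'cV[R]_q)
  (mu_ : nat -> 'cV[R]_p) (nulo nuhi : nat -> 'cV[R]_mu)
  (sig : nat -> 'cV[R]_r) : Prop :=
  (forall t, (t < T)%N ->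
     [/\ Q^T *m rho t + lam t - A^T *m lam t.+1 + F^T *m mu_ t = 0,
         Rw^T *m sig t - B^T *m lam t.+1 + G^T *m mu_ t
           + (selV nu mu)^T *m (nuhi t - nulo t) = 0,
         mxle 0 (mu_ t), mxle 0 (nulo t) & mxle 0 (nuhi t)]) /\
  Q^T *m rho T + lam T = 0.

Definition dual_objective nx mu p q r (T : nat) (h : 'cV[R]_p)
  (vlo vhi : nat -> 'cV[R]_mu) (xi : 'cV[R]_nx)
  (lam : nat -> 'cV[R]_nx) (rho : nat -> 'cV[R]_q)
  (mu_ : nat -> 'cV[R]_p) (nulo nuhi : nat -> 'cV[R]_mu)
  (sig : nat -> 'cV[R]_r) : R :=
  - (\sum_(t < T.+1) sqnorm ((2%:R)^-1 *: rho t))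
  - (\sum_(t < T) (sqnorm ((2%:R)^-1 *: sig t) + dotp h (mu_ t)
                   + dotp (vhi t) (nuhi t) - dotp (vlo t) (nulo t)))
  - dotp xi (lam 0%N).

Definition shift_lo mu (T : nat) (vlo : nat -> 'cV[R]_mu) (t : nat) : 'cV[R]_mu :=
  if (t.+1 < T)%N then vlo t.+1 else zerov mu.
Definition shift_hi mu (T : nat) (vhi : nat -> 'cV[R]_mu) (t : nat) : 'cV[R]_mu :=
  if (t.+1 < T)%N then vhi t.+1 else onev mu.

End Defs.

Arguments selV {R} nu mu.
Arguments zerov {R} m.
Arguments onev {R} m.

(* Main.v *)
Require Import Defs.
From HB Require Import structures.
From mathcomp Require Import all_boot all_order all_algebra.
From mathcomp Require Import all_classical all_reals all_analysis.
From mathcomp Require Import lra.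
Import Order.TTheory GRing.Theory Num.Theory.
Local Open Scope ring_scope.
Set Implicit Arguments. Unset Strict Implicit.

Section Tool.
Variable R : realType.
Implicit Types n m : nat.

Lemma dotpE n (u v : 'cV[R]_n) : dotp u v = (u^T *m v) 0 0.
Proof. rewrite /dotp !mxE; apply: eq_bigr => i _; by rewrite mxE. Qed.

Lemma dotp_mulT n m (M : 'M[R]_(m, n)) (u : 'cV[R]_n) (v : 'cV[R]_m) :
  dotp u (M^T *m v) = dotp (M *m u) v.
Proof. by rewrite !dotpE trmx_mul mulmxA. Qed.

Lemma dotpDl n (u w v : 'cV[R]_n) : dotp (u + w) v = dotp u v + dotp w v.
Proof. rewrite /dotp -big_split; apply: eq_bigr => i _; by rewrite !mxE mulrDl. Qed.
Lemma dotpDr n (u w v : 'cV[R]_n) : dotp v (u + w) = dotp v u + dotp v w.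
Proof. rewrite /dotp -big_split; apply: eq_bigr => i _; by rewrite !mxE mulrDr. Qed.
Lemma dotpNl n (u v : 'cV[R]_n) : dotp (- u) v = - dotp u v.
Proof. rewrite /dotp -sumrN; apply: eq_bigr => i _; by rewrite !mxE mulNr. Qed.
Lemma dotpNr n (u v : 'cV[R]_n) : dotp v (- u) = - dotp v u.
Proof. rewrite /dotp -sumrN; apply: eq_bigr => i _; by rewrite !mxE mulrN. Qed.
Lemma dotpBl n (u w v : 'cV[R]_n) : dotp (u - w) v = dotp u v - dotp w v.
Proof. by rewrite dotpDl dotpNl. Qed.
Lemma dotpBr n (u w v : 'cV[R]_n) : dotp v (u - w) = dotp v u - dotp v w.
Proof. by rewrite dotpDr dotpNr. Qed.
Lemma dotpZl n a (u v : 'cV[R]_n) : dotp (a *: u) v = a * dotp u v.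
Proof. rewrite /dotp mulr_sumr; apply: eq_bigr => i _; by rewrite !mxE mulrA. Qed.
Lemma dotpC n (u v : 'cV[R]_n) : dotp u v = dotp v u.
Proof. rewrite /dotp; apply: eq_bigr => i _; by rewrite mulrC. Qed.
Lemma dotp0r n (u : 'cV[R]_n) : dotp u 0 = 0.
Proof. rewrite /dotp big1 // => i _; by rewrite mxE mulr0. Qed.
Lemma dotp0l n (u : 'cV[R]_n) : dotp 0 u = 0.
Proof. by rewrite dotpC dotp0r. Qed.
Lemma sqnormE n (u : 'cV[R]_n) : sqnorm u = dotp u u.
Proof. rewrite /sqnorm /dotp; apply: eq_bigr => i _; by rewrite expr2. Qed.
Lemma sqnorm_ge0 n (u : 'cV[R]_n) : 0 <= sqnorm u.
Proof. rewrite /sqnorm; apply: sumr_ge0 => i _; exact: sqr_ge0. Qed.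
Lemma dotp_le n (a b c : 'cV[R]_n) : mxle a b -> mxle 0 c -> dotp a c <= dotp b c.
Proof.
move=> hab hc; rewrite /dotp; apply: ler_sum => i _.
apply: ler_wpM2r; last exact: hab.
by have := hc i 0; rewrite mxE.
Qed.
Lemma sqnormB n (u v : 'cV[R]_n) : sqnorm (u - v) = sqnorm u - 2 * dotp u v + sqnorm v.
Proof. rewrite !sqnormE !dotpBl !dotpBr (dotpC v u). lra. Qed.
Lemma sqnormD n (u v : 'cV[R]_n) : sqnorm (u + v) = sqnorm u + 2 * dotp u v + sqnorm v.
Proof. rewrite !sqnormE !dotpDl !dotpDr (dotpC v u). lra. Qed.
Lemma sqnormDh n (a b : 'cV[R]_n) :
  sqnorm (a + (2%:R)^-1 *: b) = sqnorm a + dotp a b + sqnorm ((2%:R)^-1 *: b).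
Proof.
by rewrite sqnormD (dotpC a) dotpZl (dotpC b) mulrA mulfV ?mul1r // pnatr_eq0.
Qed.
Lemma sqnormBh n (a b : 'cV[R]_n) :
  sqnorm (a - (2%:R)^-1 *: b) = sqnorm a - dotp a b + sqnorm ((2%:R)^-1 *: b).
Proof.
by rewrite sqnormB (dotpC a) dotpZl (dotpC b) mulrA mulfV ?mul1r // pnatr_eq0.
Qed.
Lemma sqnormhB n (a b : 'cV[R]_n) :
  sqnorm ((2%:R)^-1 *: b - a) = sqnorm ((2%:R)^-1 *: b) - dotp a b + sqnorm a.
Proof.
rewrite sqnormB dotpZl (dotpC b) mulrA mulfV ?mul1r ?pnatr_eq0 //.
Qed.
Lemma sqnorm0 n : sqnorm (0 : 'cV[R]_n) = 0.
Proof. by rewrite /sqnorm big1 // => i _; rewrite mxE expr0n. Qed.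
Lemma sum_shift (f g : nat -> R) n :
  (forall i, (i < n)%N -> f i = g i.+1) -> f n = 0 ->
  \sum_(i < n.+1) f i = \sum_(i < n.+1) g i - g 0%N.
Proof.
move=> hfg hn; rewrite big_ord_recr /= hn addr0 [in RHS]big_ord_recl /=.
rewrite addrC addKr; apply: eq_bigr => i _; rewrite hfg //.
Qed.
End Tool.

Section Weak.
Variable R : realType.

Lemma telesc (g : nat -> R) T : \sum_(i < T) (g i.+1 - g i) = g T - g 0%N.
Proof.
elim: T => [|T IH]; first by rewrite big_ord0 subrr.
rewrite big_ord_recr /= IH; lra.
Qed.

Lemma weak_dual nx nu mu p q r T
  (A : 'M[R]_nx) (B : 'M[R]_(nx, nu + mu)) (F : 'M[R]_(p, nx))
  (G : 'M[R]_(p, nu + mu)) (h : 'cV[R]_p) (Q : 'M[R]_(q, nx))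
  (Rw : 'M[R]_(r, nu + mu)) (vlo vhi : nat -> 'cV[R]_mu) (xi : 'cV[R]_nx)
  x u lam rho mu_ nulo nuhi sig :
  dual_feasible T A B F G Q Rw lam rho mu_ nulo nuhi sig ->
  primal_feasible T A B F G h vlo vhi xi x u ->
  dual_objective T h vlo vhi xi lam rho mu_ nulo nuhi sig <= primal_cost T Q Rw x u.
Proof.
move=> [hd hdT] [hx0 hp].
pose g t := dotp (x t) (lam t).
have key : forall t, (t < T)%N ->
  g t.+1 - g t <= sqnorm (Q *m x t) + sqnorm ((2%:R)^-1 *: rho t)
     + sqnorm (Rw *m u t) + sqnorm ((2%:R)^-1 *: sig t) + dotp h (mu_ t)
     + dotp (vhi t) (nuhi t) - dotp (vlo t) (nulo t).
  move=> t tT; have [E1 E2 m0 n0 n1] := hd t tT.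
  have [X1 D1 L1 H1] := hp t tT.
  have e1 := congr1 (dotp (x t)) E1.
  rewrite dotp0r ?dotpDr ?dotpNr ?dotp_mulT in e1.
  have e2 := congr1 (dotp (u t)) E2.
  rewrite dotp0r ?dotpDr ?dotpNr ?dotp_mulT ?dotpDr ?dotpNr in e2.
  have ex : g t.+1 = dotp (A *m x t) (lam t.+1) + dotp (B *m u t) (lam t.+1).
    by rewrite /g X1 dotpDl.
  have i1 := dotp_le D1 m0; rewrite dotpDl in i1.
  have i2 := dotp_le H1 n1.
  have i3 := dotp_le L1 n0.
  have s1 := sqnorm_ge0 (Q *m x t - (2%:R)^-1 *: rho t).
  have s2 := sqnorm_ge0 (Rw *m u t - (2%:R)^-1 *: sig t).
  rewrite sqnormBh in s1.
  rewrite sqnormBh in s2.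
  rewrite ex /g; lra.
have keyT : - g T <= sqnorm (Q *m x T) + sqnorm ((2%:R)^-1 *: rho T).
  have e1 := congr1 (dotp (x T)) hdT.
  rewrite dotp0r !dotpDr !dotp_mulT in e1.
  have s1 := sqnorm_ge0 (Q *m x T - (2%:R)^-1 *: rho T).
  rewrite sqnormBh in s1.
  rewrite /g; lra.
have S : \sum_(i < T) (g i.+1 - g i) <= \sum_(i < T)
       (sqnorm (Q *m x i) + sqnorm ((2%:R)^-1 *: rho i) +
        sqnorm (Rw *m u i) + sqnorm ((2%:R)^-1 *: sig i) +
        dotp h (mu_ i) + dotp (vhi i) (nuhi i) - dotp (vlo i) (nulo i)).
  by apply: ler_sum => i _; apply: key.
rewrite telesc /g hx0 in S.
rewrite /dual_objective /primal_cost !big_ord_recr /=.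
rewrite ?big_split /= ?sumrN ?big_split /= in S.
rewrite ?big_split /= ?sumrN ?big_split /=.
rewrite /g in keyT.

lra.
Qed.
End Weak.

Theorem theorem1 (R : realType) (nx nu mu p q r T : nat) (hT : (1 <= T)%N)
  (A : 'M[R]_nx) (B : 'M[R]_(nx, nu + mu)) (F : 'M[R]_(p, nx))
  (G : 'M[R]_(p, nu + mu)) (h : 'cV[R]_p) (Q : 'M[R]_(q, nx))
  (Rw : 'M[R]_(r, nu + mu))
  (hD0 : mxle (F *m (0 : 'cV[R]_nx) + G *m (0 : 'cV[R]_(nu + mu))) h)
  (x0 : 'cV[R]_nx) (u0 : 'cV[R]_(nu + mu))
  (hu0 : is_binary (selV nu mu *m u0))
  (hxu0 : mxle (F *m x0 + G *m u0) h)
  (e0 : 'cV[R]_nx)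
  (vlo vhi : nat -> 'cV[R]_mu)
  (hV0 : is_bin_interval T vlo vhi)
  (hv0lo : mxle (vlo 0%N) (selV nu mu *m u0))
  (hv0hi : mxle (selV nu mu *m u0) (vhi 0%N))
  (lam : nat -> 'cV[R]_nx) (rho : nat -> 'cV[R]_q)
  (mu_ : nat -> 'cV[R]_p) (nulo nuhi : nat -> 'cV[R]_mu)
  (sig : nat -> 'cV[R]_r)
  (hdual : dual_feasible T A B F G Q Rw lam rho mu_ nulo nuhi sig) :
  let v0 := selV nu mu *m u0 in
  let x1 := A *m x0 + B *m u0 + e0 in
  let theta0 := dual_objective T h vlo vhi x0 lam rho mu_ nulo nuhi sig in
  let pi1 := - sqnorm (Q *m x0) - sqnorm (Rw *m u0) in
  let pi2 := sqnorm ((2%:R)^-1 *: rho 0%N - Q *m x0)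
             + sqnorm ((2%:R)^-1 *: sig 0%N - Rw *m u0) in
  let pi3 := dotp (h - F *m x0 - G *m u0) (mu_ 0%N)
             + dotp (v0 - vlo 0%N) (nulo 0%N)
             + dotp (vhi 0%N - v0) (nuhi 0%N) in
  let pi4 := - dotp e0 (lam 1%N) in
  ((theta0 + pi1 + pi2 + pi3 + pi4)%:E <=
     thetaP T A B F G h Q Rw (shift_lo T vlo) (shift_hi T vhi) x1)%E.
Proof.
case: T hT hV0 hdual => [//|T'] hT hV0 hdual.
cbv zeta.
have [hd hdT] := hdual.
pose lam' t := if (t < T'.+1)%N then lam t.+1 else 0.
pose rho' t := if (t < T'.+1)%N then rho t.+1 else 0.
pose mu' t := if (t.+1 < T'.+1)%N then mu_ t.+1 else 0.
pose nulo' t := if (t.+1 < T'.+1)%N then nulo t.+1 else 0.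
pose nuhi' t := if (t.+1 < T'.+1)%N then nuhi t.+1 else 0.
pose sig' t := if (t.+1 < T'.+1)%N then sig t.+1 else 0.
have hf : (T'.+1 < T'.+1)%N = false := ltnn _.
have DF : dual_feasible T'.+1 A B F G Q Rw lam' rho' mu' nulo' nuhi' sig'.
  split; last by rewrite /lam' /rho' /= !(ifF _ _ hf) mulmx0 addr0.
  move=> t tT; rewrite /lam' /rho' /mu' /nulo' /nuhi' /sig' tT.
  case: (ltnP t.+1 T'.+1) => h1; first exact: hd.
  have eT : t.+1 = T'.+1 by apply/eqP; rewrite eqn_leq tT h1.
  rewrite -eT in hdT.
  have hf2 : (t.+1 < T'.+1)%N = false by rewrite ltnNge h1.
  rewrite subrr !mulmx0 !subr0 !addr0; split => //; by move=> i j; rewrite mxE.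
have [E1 E2 _ _ _] := hd 0%N isT.
apply: le_ereal_inf_tmp => c [x [u [hp ->]]].
rewrite lee_fin; have H := weak_dual DF hp; apply: le_trans H.
rewrite le_eqVlt; apply/orP; left; apply/eqP.
have Erho : \sum_(t < T'.+2) sqnorm ((2%:R)^-1 *: rho' t)
   = \sum_(t < T'.+2) sqnorm ((2%:R)^-1 *: rho t) - sqnorm ((2%:R)^-1 *: rho 0%N).
  have := @sum_shift R (fun t => sqnorm ((2%:R)^-1 *: rho' t)) (fun t => sqnorm ((2%:R)^-1 *: rho t)) T'.+1. move=> H; apply: H.
    by move=> i hi; rewrite /rho' (ifT _ _ hi).
  by rewrite /rho' (ifF _ _ hf) scaler0 sqnorm0.
have Eterm : \sum_(t < T'.+1) (sqnorm ((2%:R)^-1 *: sig' t) + dotp h (mu' t)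
     + dotp (shift_hi T'.+1 vhi t) (nuhi' t) - dotp (shift_lo T'.+1 vlo t) (nulo' t))
   = \sum_(t < T'.+1) (sqnorm ((2%:R)^-1 *: sig t) + dotp h (mu_ t)
     + dotp (vhi t) (nuhi t) - dotp (vlo t) (nulo t))
     - (sqnorm ((2%:R)^-1 *: sig 0%N) + dotp h (mu_ 0%N)
     + dotp (vhi 0%N) (nuhi 0%N) - dotp (vlo 0%N) (nulo 0%N)).
  have := @sum_shift R (fun t => sqnorm ((2%:R)^-1 *: sig' t) + dotp h (mu' t)
     + dotp (shift_hi T'.+1 vhi t) (nuhi' t) - dotp (shift_lo T'.+1 vlo t) (nulo' t))
     (fun t => sqnorm ((2%:R)^-1 *: sig t) + dotp h (mu_ t)
     + dotp (vhi t) (nuhi t) - dotp (vlo t) (nulo t)) T'.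
  move=> H; apply: H.
    move=> i hi; have hi' : (i.+1 < T'.+1)%N by [].
    by rewrite /sig' /mu' /nuhi' /nulo' /shift_hi /shift_lo !(ifT _ _ hi').
  by rewrite /sig' /mu' /nuhi' /nulo' !(ifF _ _ hf) scaler0 sqnorm0 !dotp0r; lra.
rewrite /dual_objective Erho Eterm /lam' /=.
have e1 := congr1 (dotp x0) E1.
rewrite dotp0r ?dotpDr ?dotpNr ?dotp_mulT in e1.
have e2 := congr1 (dotp u0) E2.
rewrite dotp0r ?dotpDr ?dotpNr ?dotp_mulT ?dotpDr ?dotpNr in e2.
rewrite !sqnormhB ?dotpDl ?dotpNl ?dotpDl ?dotpNl.
lra.
Qed.
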